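(* Let $M\subseteq[r]^d$ be a dot array satisfying (P2') and (P3). If $\mathbf x,\mathbf y\in M$ and $i\ne j$ are indices with $x_i>y_i$ and $x_j=y_j$, then there exists $\mathbf b\in M$ with $b_i=y_i$ and $b_j>y_j$.
   Context: $[r]=\{0,\dots,r\}$ and a dot array is a subset of $[r]^d$; for an element $\mathbf w$, $w_i$ (or $w_{k,i}$ for $\mathbf w_k$) denotes its $i$-th coordinate. (P2') for any distinct $i,j\in\{1,\dots,d\}$ and all integers $r_i,r_j\ge0$ with $r_i+r_j=r$, there are $\mathbf z,\mathbf w_1,\dots,\mathbf w_{r_i},\mathbf u_1,\dots,\mathbf u_{r_j}\in M$ with: (a) $w_{1,i}<\dots<w_{r_i,i}<z_i$; (b) $u_{1,j}<\dots<u_{r_j,j}<z_j$; (c) $u_{k,j}<w_{k',j}$ for all $k,k'$. (P3) every set $S$ of $r+2$ elements of $M$ contains a subset $S'$ (with at least two elements) such that for every $1\le i\le d$ the value $\min\{x_i:\mathbf x\in S'\}$ is attained by at least two elements of $S'$. *)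

(* Defs.v *)
From mathcomp Require Import all_boot.
Set Implicit Arguments. Unset Strict Implicit. Unset Printing Implicit Defensive.

(* Points of [r]^d, [r] = {0,...,r}; coordinates indexed by 'I_d
   (coordinate i of the paper, 1 <= i <= d, is index i-1 here). *)
Definition point (r d : nat) := {ffun 'I_d -> 'I_r.+1}.

Definition coord r d (x : point r d) (i : 'I_d) : nat := nat_of_ord (x i).

Definition dot_array (r d : nat) := {set point r d}.

Definition P2' (r d : nat) (M : dot_array r d) : Prop :=
  forall (i j : 'I_d), i != j ->
  forall ri rj : nat, ri + rj = r ->
  exists (z : point r d) (w : 'I_ri -> point r d) (u : 'I_rj -> point r d),
    [/\ z \in M, (forall k, w k \in M) /\ (forall k, u k \in M),
        (forall k k' : 'I_ri, k < k' -> coord (w k) i < coord (w k') i) /\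
        (forall k : 'I_ri, coord (w k) i < coord z i),
        (forall k k' : 'I_rj, k < k' -> coord (u k) j < coord (u k') j) /\
        (forall k : 'I_rj, coord (u k) j < coord z j)
      &
        forall (k : 'I_rj) (k' : 'I_ri), coord (u k) j < coord (w k') j].

Definition P3 (r d : nat) (M : dot_array r d) : Prop :=
  forall S : {set point r d}, S \subset M -> #|S| = r.+2 ->
  exists S' : {set point r d}, [/\ S' \subset S, 2 <= #|S'| &
    forall i : 'I_d,
      exists x y, [/\ x \in S', y \in S', x != y, coord x i = coord y i &
                     forall z, z \in S' -> coord x i <= coord z i]].

(* Main.v *)
Require Import Defs.
From mathcomp Require Import all_boot zify.

Lemma L1 n (f : 'I_n -> nat) :
  (forall k k' : 'I_n, k < k' -> f k < f k') -> forall k : 'I_n, k <= f k.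
Proof.
move=> inc [m hm] /=. elim: m hm => [|m IH] hm //.
have hm' : m < n by apply: ltnW.
have h1 := IH hm'.
have h2 : f (Ordinal hm') < f (Ordinal hm) by apply: inc => /=.
lia.
Qed.

Lemma L2 n (f : 'I_n -> nat) B :
  (forall k k' : 'I_n, k < k' -> f k < f k') -> (forall k, f k < B) ->
  forall k : 'I_n, f k + (n - k) <= B.
Proof.
move=> inc hB [m hm] /=.
suff : forall e m (hm : m < n), n - m = e -> f (Ordinal hm) + e <= B by move/(_ _ m hm erefl).
elim=> [|e IH] m' hm' he; first lia.
case: (ltnP m'.+1 n) => h.
  have h1 := IH _ h ltac:(lia).
  have h2 : f (Ordinal hm') < f (Ordinal h) by apply: inc => /=.
  lia.
have := hB (Ordinal hm'). lia.
Qed.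

Lemma Kval r d n (y : point r d) (u : 'I_n -> point r d) k (h : k < n) :
  odflt y (omap u (insub k)) = u (Ordinal h).
Proof. by rewrite insubT. Qed.

Lemma Kval2 r d n (y : point r d) (u : 'I_n -> point r d) k (h : n <= k) :
  odflt y (omap u (insub k)) = y.
Proof. rewrite insubF //; lia. Qed.


Lemma finish r d (S' : {set point r d}) (M : dot_array r d) (i j : 'I_d) (a c : nat)
  (A : forall b, b \in M -> coord b i = a -> coord b j <= c)
  (x y : point r d) (K P : nat -> point r d) :
  coord y i = a -> coord y j = c -> a < coord x i -> coord x j = c ->
  (forall k, k < c -> K k \in M /\ coord (K k) j < c) ->
  (forall k1 k2, k1 < c -> k2 < c -> coord (K k1) j = coord (K k2) j -> k1 = k2) ->
  (forall t, t < r - c -> P t \in M /\ c < coord (P t) j) ->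
  (forall t1 t2, t1 < r - c -> t2 < r - c -> coord (P t1) i = coord (P t2) i -> t1 = t2) ->
  (forall p, p \in S' -> [\/ exists2 k, k < c & p = K k,
     exists2 t, t < r - c & p = P t, p = y | p = x]) ->
  (exists p1 p2, [/\ p1 \in S', p2 \in S', p1 != p2, coord p1 j = coord p2 j &
                     forall z, z \in S' -> coord p1 j <= coord z j]) ->
  (exists p1 p2, [/\ p1 \in S', p2 \in S', p1 != p2, coord p1 i = coord p2 i &
                     forall z, z \in S' -> coord p1 i <= coord z i]) ->
  False.
Proof.
move=> yi yj ax xj HK HKi HP HPi cls [p1 [p2 [p1S p2S ne12 e12 min12]]]
  [q1 [q2 [q1S q2S neq eq12 minq]]].
have s1 : c <= coord p1 j.
  rewrite leqNgt; apply/negP => hlt.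
  have kk : forall p, p \in S' -> coord p j < c -> exists2 k, k < c & p = K k.
    move=> p pS; case: (cls p pS) => [[k hk ->]|[t ht ->]|->|->] hp.
    - by exists k.
    - by have [_ ?] := HP t ht; lia.
    - lia.
    - lia.
  have [k1 hk1 E1] := kk p1 p1S hlt.
  have [k2 hk2 E2] := kk p2 p2S ltac:(lia).
  move: ne12; rewrite E1 E2; move: e12; rewrite E1 E2 => e.
  by rewrite (HKi _ _ hk1 hk2 e) eqxx.
have allc : forall p, p \in S' -> c <= coord p j.
  by move=> p pS; apply: leq_trans s1 (min12 p pS).
have nK : forall p, p \in S' -> [\/ exists2 t, t < r - c & p = P t, p = y | p = x].
  move=> p pS; case: (cls p pS) => [[k hk E]|?|?|?].
  - have := allc p pS; rewrite E; have [_ ?] := HK k hk; lia.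
  - by apply: Or31.
  - by apply: Or32.
  - by apply: Or33.
have xin : x \in S' /\ coord q1 i = coord x i.
  case: (nK q1 q1S) => [[t1 ht1 E1]|E1|E1]; case: (nK q2 q2S) => [[t2 ht2 E2]|E2|E2].
  - have e := HPi _ _ ht1 ht2 ltac:(by rewrite -E1 -E2).
    by move: neq; rewrite E1 E2 e eqxx.
  - have [Pm hPj] := HP t1 ht1. have := A _ Pm ltac:(rewrite -E1 eq12 E2 yi //). lia.
  - by split; [rewrite -E2 | rewrite eq12 E2].
  - have [Pm hPj] := HP t2 ht2. have := A _ Pm ltac:(rewrite -E2 -eq12 E1 yi //). lia.
  - by move: neq; rewrite E1 E2 eqxx.
  - move: eq12; rewrite E1 E2; lia.
  - by split; [rewrite -E1 | rewrite E1].
  - move: eq12; rewrite E1 E2; lia.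
  - by move: neq; rewrite E1 E2 eqxx.
case: xin => xS qx.
have ynS : y \notin S'.
  apply/negP => yS; have := minq y yS; lia.
have p1c : coord p1 j = c.
  have := min12 x xS; lia.
have isx : forall p, p \in S' -> coord p j = c -> p = x.
  move=> p pS hp; case: (nK p pS) => [[t ht E]|E|E] //.
  - by have [_ ?] := HP t ht; rewrite E in hp; lia.
  - by move: ynS; rewrite -E pS.
have := isx p1 p1S p1c. have := isx p2 p2S ltac:(lia).
by move=> E2 E1; move: ne12; rewrite E1 E2 eqxx.
Qed.

Lemma core r d (M : dot_array r d) (HP3 : P3 M) (i j : 'I_d) (a c : nat)
  (A : forall b, b \in M -> coord b i = a -> coord b j <= c)
  (x y : point r d) (K P : nat -> point r d) :
  c <= r -> x \in M -> y \in M -> coord y i = a -> coord y j = c ->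
  a < coord x i -> coord x j = c ->
  (forall k, k < c -> K k \in M /\ coord (K k) j < c) ->
  (forall k1 k2, k1 < c -> k2 < c -> coord (K k1) j = coord (K k2) j -> k1 = k2) ->
  (forall t, t < r - c -> P t \in M /\ c < coord (P t) j) ->
  (forall t1 t2, t1 < r - c -> t2 < r - c -> coord (P t1) i = coord (P t2) i -> t1 = t2) ->
  False.
Proof.
move=> hcr xM yM yi yj ax xj HK HKi HP HPi.
pose f (k : 'I_r.+2) := if k < c then K k else if k < r then P (k - c)
   else if k == r :> nat then y else x.
have Hf : forall k : 'I_r.+2, [\/ (k < c /\ f k = K k), (c <= k < r /\ f k = P (k - c)),
    (k = r :> nat /\ f k = y) | (k = r.+1 :> nat /\ f k = x)].
  move=> k; rewrite /f; have := ltn_ord k.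
  case: ifP => h1; first by move=> _; apply: Or41.
  case: ifP => h2; first by move=> _; apply: Or42; split => //; lia.
  case: eqP => h3; first by move=> _; apply: Or43.
  move=> hk; apply: Or44; split => //; lia.
have finj : injective f.
  move=> k1 k2 e; apply: val_inj => /=.
  have ej := congr1 (fun p => coord p j) e; have ei := congr1 (fun p => coord p i) e.
  simpl in ej, ei.
  case: (Hf k1) => [[h1 e1]|[/andP[h1 h1'] e1]|[h1 e1]|[h1 e1]];
  case: (Hf k2) => [[h2 e2]|[/andP[h2 h2'] e2]|[h2 e2]|[h2 e2]];
  rewrite e1 e2 in ej ei.
  all: try (have := HKi _ _ h1 h2 ej; lia).
  all: try (have := HPi (k1 - c) (k2 - c) ltac:(lia) ltac:(lia) ei; lia).
  all: try (have [_ hk1] := HK _ h1).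
  all: try (have [_ hk2] := HK _ h2).
  all: try (have [_ hp1] := HP (k1 - c) ltac:(lia)).
  all: try (have [_ hp2] := HP (k2 - c) ltac:(lia)).
  all: try lia.
pose S := f @: [set: 'I_r.+2].
have cS : #|S| = r.+2 by rewrite card_imset // cardsT card_ord.
have SM : S \subset M.
  apply/subsetP => p /imsetP [k _ ->].
  case: (Hf k) => [[h e]|[/andP[h h'] e]|[h e]|[h e]]; rewrite e //.
    by case: (HK _ h).
  by case: (HP (k - c) ltac:(lia)).
have [S' [sub two H]] := HP3 S SM cS.
have cls : forall p, p \in S' -> [\/ exists2 k, k < c & p = K k,
     exists2 t, t < r - c & p = P t, p = y | p = x].
  move=> p /(subsetP sub) /imsetP [k _ ->].
  case: (Hf k) => [[h e]|[/andP[h h'] e]|[h e]|[h e]]; rewrite e.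
  - by apply: Or41; exists k.
  - by apply: Or42; exists (k - c) => //; lia.
  - by apply: Or43.
  - by apply: Or44.
exact: (@finish r d S' M i j a c A x y K P yi yj ax xj HK HKi HP HPi cls (H j) (H i)).
Qed.

Theorem mainTheorem12 (r d : nat) (M : dot_array r d) :
  P2' M -> P3 M ->
  forall (x y : point r d) (i j : 'I_d),
    x \in M -> y \in M -> i != j ->
    coord y i < coord x i -> coord x j = coord y j ->
    exists b : point r d, [/\ b \in M, coord b i = coord y i & coord y j < coord b j].
Proof.
move=> HP2 HP3 x y i j xM yM nij yx xyj.
case: (boolP [exists b, [&& b \in M, coord b i == coord y i & coord y j < coord b j]]).
  by move/existsP=> [b /and3P [bM /eqP bi bj]]; exists b.
move/existsPn => nb; exfalso.
have A : forall b, b \in M -> coord b i = coord y i -> coord b j <= coord y j.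
  move=> b bM bi; move: (nb b); rewrite bM bi eqxx /= -leqNgt; done.
have hcr : coord y j <= r by rewrite -ltnS; exact: ltn_ord.
have [z0 [w0 [u [z0M [_ uM] _ [uinc uz] _]]]] := HP2 i j nij 0 r (add0n r).
have ub : forall k : 'I_r, coord (u k) j <= k.
  move=> k; have h1 := @L2 r (fun k => coord (u k) j) (coord z0 j) uinc uz k.
  have h2 : coord z0 j < r.+1 := ltn_ord (z0 j).
  have h3 := ltn_ord k. simpl in h1. lia.
pose K := fun k => odflt y (omap u (insub k)).
have HK : forall k, k < coord y j -> K k \in M /\ coord (K k) j < coord y j.
  move=> k hk; have h : k < r by apply: leq_trans hk hcr.
  rewrite /K (@Kval r d r y u k h); split => //; have := ub (Ordinal h); simpl; lia.
have HKi : forall k1 k2, k1 < coord y j -> k2 < coord y j ->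
    coord (K k1) j = coord (K k2) j -> k1 = k2.
  move=> k1 k2 h1 h2; have h1' : k1 < r by apply: leq_trans h1 hcr.
  have h2' : k2 < r by apply: leq_trans h2 hcr.
  rewrite /K (@Kval r d r y u k1 h1') (@Kval r d r y u k2 h2') => e.
  case: (ltngtP k1 k2) => // h.
    by have := uinc (Ordinal h1') (Ordinal h2') h; rewrite e ltnn.
  by have := uinc (Ordinal h2') (Ordinal h1') h; rewrite e ltnn.
case: (ltnP (coord y j) r) => hcr2; last first.
  apply: (@core r d M HP3 i j _ (coord y j) A x y K (fun _ => y) hcr xM yM erefl erefl yx xyj HK HKi).
    by move=> t; rewrite (_ : r - coord y j = 0) //; lia.
  by move=> t1 t2; rewrite (_ : r - coord y j = 0) //; lia.
set c := coord y j in hcr hcr2 HK HKi xyj A.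
have e : (r - c.+1) + c.+1 = r by lia.
have [z [w [u' [zM [wM _] [winc wz] [u'inc u'z] wu]]]] := HP2 i j nij (r - c.+1) c.+1 e.
have lb := @L1 c.+1 (fun k => coord (u' k) j) u'inc ord_max. simpl in lb.
pose P := fun t => odflt z (omap w (insub t)).
have Pv : forall t, t < r - c -> (exists h : t < r - c.+1, P t = w (Ordinal h)) \/ (P t = z /\ t = r - c.+1).
  move=> t ht; have [h|h] := orP (orbN (t < r - c.+1)).
    by left; exists h; rewrite /P (@Kval r d _ z w t h).
  by right; rewrite -leqNgt in h; rewrite /P (@Kval2 r d _ z w t h); split => //; lia.
have HP : forall t, t < r - c -> P t \in M /\ c < coord (P t) j.
  move=> t ht; case: (Pv t ht) => [[h ->]|[-> _]].
    split => //; have := wu ord_max (Ordinal h); lia.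
  split => //; have := u'z ord_max; lia.
have HPi : forall t1 t2, t1 < r - c -> t2 < r - c -> coord (P t1) i = coord (P t2) i -> t1 = t2.
  move=> t1 t2 h1 h2.
  case: (Pv t1 h1) => [[g1 ->]|[-> g1]]; case: (Pv t2 h2) => [[g2 ->]|[-> g2]].
  - move=> ee; case: (ltngtP t1 t2) => // h.
      by have := winc (Ordinal g1) (Ordinal g2) h; rewrite ee ltnn.
    by have := winc (Ordinal g2) (Ordinal g1) h; rewrite ee ltnn.
  - by have := wz (Ordinal g1) => hh ee; rewrite ee ltnn in hh.
  - by have := wz (Ordinal g2) => hh ee; rewrite ee ltnn in hh.
  - move=> _; lia.
exact: (@core r d M HP3 i j _ c A x y K P hcr xM yM erefl erefl yx xyj HK HKi HP HPi).
Qed.
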